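(* Let $a>0$, $\beta>0$, and let $\lambda$ be feasible. Then for every $0<\delta\le\delta_0$, \[ |g|^2\ge\begin{cases} 9\mathrm{e}^{-4ka}\dfrac{\delta^2}{(2\delta^2+\lambda\delta^{\beta+1})^2} & \text{for } 0\le k\le k_0(\delta),\\[0.4cm] \mathrm{e}^{-ka}\dfrac{\delta^2}{(2\delta^2+\lambda\delta^{\beta+1})^{1/2}} & \text{for } k\ge k_0(\delta). \end{cases} \]
   Context: For $0<\delta<1$ and constants $\beta>0$, $\lambda\in\mathbb{R}$, put $\mu=\delta+\lambda\delta^{\beta}$. The constant $\lambda$ is called feasible if $\lambda>0$ when $0<\beta<1$, $\lambda\ge -1$ when $\beta=1$, and $\lambda\neq 0$ when $\beta>1$. For feasible $\lambda$, $\delta_\mu=\delta_\mu(\beta,\lambda)\in(0,1)$ denotes a number such that $\mu\ge 0$ for all $0<\delta\le\delta_\mu$. For $k\in\mathbb{R}$ define \[ g=g(k,\delta)=\mathrm{i}\delta\left[1-\frac{(\delta+2\mathrm{i})(2\mathrm{i}-\lambda\delta^{\beta})}{\delta(2\delta+\lambda\delta^{\beta})}\mathrm{e}^{-2|k|a}\right], \qquad k_0(\delta)=\frac{1}{2a}\ln\!\left(\frac{1}{2\delta^2+\lambda\delta^{\beta+1}}\right), \] and let $0<\delta_0\le\delta_\mu$ be such that $k_0(\delta)>0$ for all $0<\delta\le\delta_0$. *)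

(* Defs.v *)
From Stdlib Require Import Reals.
From Coquelicot Require Import Coquelicot.
Open Scope R_scope.

Definition feasible (beta lam : R) : Prop :=
  (0 < beta < 1 /\ 0 < lam) \/ (beta = 1 /\ -1 <= lam) \/ (1 < beta /\ lam <> 0).

Definition mu (beta lam delta : R) : R := delta + lam * Rpower delta beta.

Definition g (a beta lam k delta : R) : C :=
  (Ci * RtoC delta *
   (1 - (RtoC delta + 2 * Ci) * (Ci * 2 - RtoC (lam * Rpower delta beta))
        / RtoC (delta * (2 * delta + lam * Rpower delta beta))
        * RtoC (exp (- 2 * Rabs k * a))))%C.

Definition k0 (a beta lam delta : R) : R :=
  / (2 * a) * ln (/ (2 * delta ^ 2 + lam * Rpower delta (beta + 1))).

(* Main.v *)
Require Import Defs.
From Stdlib Require Import Reals Lra Psatz.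
From Coquelicot Require Import Coquelicot.
Open Scope R_scope.

Lemma g_sq (a beta lam k delta : R) (D : R) :
  D = delta * (2 * delta + lam * Rpower delta beta) -> D <> 0 ->
  (Cmod (g a beta lam k delta)) ^ 2 =
  (2 * delta * (delta - lam * Rpower delta beta) * exp (- 2 * Rabs k * a) / D) ^ 2 +
  (delta * (1 + (delta * (lam * Rpower delta beta) + 4) * exp (- 2 * Rabs k * a) / D)) ^ 2.
Proof.
  intros HD HD0.
  assert (Hg : g a beta lam k delta =
    (2 * delta * (delta - lam * Rpower delta beta) * exp (- 2 * Rabs k * a) / D,
     delta * (1 + (delta * (lam * Rpower delta beta) + 4) * exp (- 2 * Rabs k * a) / D))).
  { unfold g. rewrite <- HD.
    set (P := lam * Rpower delta beta). set (E := exp (- 2 * Rabs k * a)).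
    unfold Cdiv, Cminus, Cmult, Cplus, Copp, Cinv, RtoC, Ci; simpl.
    apply injective_projections; simpl; field_simplify; try field; try nra. }
  rewrite Hg. unfold Cmod. simpl fst. simpl snd.
  apply pow2_sqrt; apply Rplus_le_le_0_compat; apply pow2_ge_0.
Qed.

Theorem lemma5p1 (a beta lam delta_mu delta0 : R)
  (ha : 0 < a) (hbeta : 0 < beta) (hlam : feasible beta lam)
  (hdmu : 0 < delta_mu < 1)
  (hmu : forall d, 0 < d <= delta_mu -> 0 <= mu beta lam d)
  (hd0 : 0 < delta0 <= delta_mu)
  (hk0 : forall d, 0 < d <= delta0 -> 0 < k0 a beta lam d) :
  forall delta, 0 < delta <= delta0 ->
    (forall k, 0 <= k <= k0 a beta lam delta ->
       (Cmod (g a beta lam k delta)) ^ 2 >=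
       9 * exp (- 4 * k * a) * delta ^ 2
         / (2 * delta ^ 2 + lam * Rpower delta (beta + 1)) ^ 2) /\
    (forall k, k >= k0 a beta lam delta ->
       (Cmod (g a beta lam k delta)) ^ 2 >=
       exp (- k * a) * delta ^ 2
         / sqrt (2 * delta ^ 2 + lam * Rpower delta (beta + 1))).
Proof.
  intros d Hd.
  assert (Hm := hmu d ltac:(lra)). unfold mu in Hm.
  set (L := lam * Rpower d beta) in *.
  assert (HR : Rpower d (beta + 1) = d * Rpower d beta).
  { rewrite Rpower_plus, Rpower_1 by lra. ring. }
  set (D := d * (2 * d + L)).
  assert (HDe : 2 * d ^ 2 + lam * Rpower d (beta + 1) = D).
  { rewrite HR. unfold D, L. ring. }
  assert (HDp : 0 < D) by (unfold D; nra).
  assert (HdL : 3 <= d * L + 4) by nra.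
  assert (Hsq := fun k => g_sq a beta lam k d D eq_refl ltac:(lra)).
  split.
  - intros k Hk. rewrite (Hsq k), HDe.
    rewrite Rabs_right by lra.
    set (E := exp (- 2 * k * a)).
    assert (HE : exp (- 4 * k * a) = E * E).
    { unfold E. rewrite <- exp_plus. f_equal. ring. }
    rewrite HE.
    assert (HEp : 0 < E) by apply exp_pos.
    fold L.
    assert (H1 : (d * L + 4) * E / D >= 3 * E / D).
    { unfold Rdiv. apply Rle_ge, Rmult_le_compat_r. left; apply Rinv_0_lt_compat; lra. nra. }
    assert (H2 : 0 <= 3 * E / D) by (unfold Rdiv; apply Rmult_le_pos; [lra | left; apply Rinv_0_lt_compat; lra]).
    assert (H3 : 9 * (E * E) * d ^ 2 / D ^ 2 = (d * (3 * E / D)) ^ 2) by (field; lra).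
    rewrite H3. apply Rle_ge.
    assert (H4 : d * (3 * E / D) <= d * (1 + (d * L + 4) * E / D)) by nra.
    assert (0 <= d * (3 * E / D)) by nra. nra.
  - intros k Hk. rewrite (Hsq k), HDe. fold L.
    set (E := exp (- 2 * Rabs k * a)).
    assert (HEp : 0 < E) by apply exp_pos.
    assert (H1 : 0 <= (d * L + 4) * E / D) by (unfold Rdiv; apply Rmult_le_pos; [nra | left; apply Rinv_0_lt_compat; lra]).
    assert (Hs : 0 < sqrt D) by (apply sqrt_lt_R0; lra).
    assert (Hk' : exp (- k * a) <= sqrt D).
    { unfold k0 in Hk. rewrite HDe in Hk.
      assert (Hl : ln (/ D) = - ln D) by (rewrite ln_Rinv; lra).
      rewrite Hl in Hk.
      assert (- k * a <= ln D / 2).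
      { assert (k * (2 * a) >= / (2 * a) * - ln D * (2 * a)) by nra.
        replace (/ (2 * a) * - ln D * (2 * a)) with (- ln D) in H by (field; lra). nra. }
      assert (HsD : sqrt D = exp (ln D / 2)).
      { rewrite <- (sqrt_Rsqr (exp (ln D / 2))) by (left; apply exp_pos).
        f_equal. unfold Rsqr. rewrite <- exp_plus.
        replace (ln D / 2 + ln D / 2) with (ln D) by field. rewrite exp_ln; lra. }
      rewrite HsD. destruct (Rle_lt_or_eq_dec _ _ H) as [H'|H'];
        [left; apply exp_increasing; auto | rewrite H'; lra]. }
    apply Rle_ge.
    apply Rle_trans with (d ^ 2).
    + unfold Rdiv. rewrite Rmult_assoc, (Rmult_comm (d^2)), <- Rmult_assoc.
      rewrite <- (Rmult_1_l (d^2)) at 2. apply Rmult_le_compat_r. nra.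
      apply (Rmult_le_reg_r (sqrt D)); auto. rewrite Rmult_assoc, Rinv_l by lra. lra.
    + nra.
Qed.
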